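(* Consider a robust constrained MDP as described in the context, and assume that the robust constrained problem $\min_{\pi} J_{c_0}^{\pi}$ subject to $J_{c_n}^{\pi}\le b_n$ for $n=1,\dots,K$ admits an optimal (in particular feasible) policy $\pi^*$. Let $\epsilon>0$, set $\lambda = 2H/\epsilon$ with $H=1/(1-\gamma)$, and let $\hat\pi^*$ be an optimal policy of the surrogate problem $$\min_{\pi}\ \max\Big\{ J_{c_0}^{\pi}/\lambda,\ \max_{n\in\{1,\dots,K\}} \big[J_{c_n}^{\pi}-b_n\big]\Big\}.$$ Then $J_{c_0}^{\hat\pi^*}\le J_{c_0}^{\pi^*}$, and $\hat\pi^*$ violates the constraints by at most $\epsilon$, i.e. $\max_{n\in\{1,\dots,K\}}\big[J_{c_n}^{\hat\pi^*}-b_n\big]\le \epsilon$.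
   Context: Setting: a finite state space $\mathcal S$ (with $S=|\mathcal S|$), finite action space $\mathcal A$, discount factor $\gamma\in[0,1)$, cost functions $c_0,c_1,\dots,c_K:\mathcal S\times\mathcal A\to[0,1]$ ($c_0$ is the objective cost, $c_1,\dots,c_K$ constraint costs), thresholds $b_1,\dots,b_K\in\mathbb R$, and an initial state distribution $\mu$. A nominal transition kernel $P_0$ is given, and the uncertainty set is $(s,a)$-rectangular: $\mathbb P=\bigotimes_{(s,a)}\mathbb P_{(s,a)}$ with $\mathbb P_{(s,a)}=\{P\in\Delta(\mathcal S): D(P,P_0(\cdot|s,a))\le \rho\}$ for a distance $D$ between distributions and radius $\rho\ge 0$. For a (Markovian, stochastic) policy $\pi$ and kernel $P$, $J_{c_i}^{\pi,P}=\mathbb E_{s_0\sim\mu,\pi,P}\big[\sum_{t\ge 0}\gamma^t c_i(s_t,a_t)\big]$, and the robust value is $J_{c_i}^{\pi}=\max_{P\in\mathbb P}J_{c_i}^{\pi,P}$. Note $0\le J_{c_i}^{\pi}\le H:=1/(1-\gamma)$. Policies range over all Markovian stochastic policies. *)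

(* Defs.v *)
From HB Require Import structures.
From mathcomp Require Import all_boot all_order all_algebra.
From mathcomp Require Import all_classical all_reals all_analysis.
Import Order.TTheory GRing.Theory Num.Theory.
Local Open Scope ring_scope.
Local Open Scope classical_set_scope.

Set Implicit Arguments.
Unset Strict Implicit.
Unset Printing Implicit Defensive.

Section RMDP.
Variables (R : realType) (S A : finType).

Definition is_dist (T : finType) (p : T -> R) : Prop :=
  (forall x, 0 <= p x) /\ \sum_(x : T) p x = 1.

(* transition kernels P(s'|s,a) = P s a s' and Markovian stochastic
   (stationary) policies pi(a|s) = pi s a *)
Definition tkernel := S -> A -> S -> R.
Definition policy := S -> A -> R.
Definition is_kernel (P : tkernel) : Prop := forall s a, is_dist (P s a).
Definition is_policy (pi : policy) : Prop := forall s, is_dist (pi s).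

Fixpoint state_dist (mu : S -> R) (pi : policy) (P : tkernel) (t : nat) : S -> R :=
  match t with
  | 0 => mu
  | t'.+1 => fun s' => \sum_(s : S) state_dist mu pi P t' s *
                        \sum_(a : A) pi s a * P s a s'
  end.

Definition disc_cost (gamma : R) (mu : S -> R) (c : S -> A -> R)
    (pi : policy) (P : tkernel) : R :=
  limn (fun N => \sum_(0 <= t < N) (gamma ^+ t *
     \sum_(s : S) state_dist mu pi P t s * \sum_(a : A) pi s a * c s a)).

Definition unc_set (D : (S -> R) -> (S -> R) -> R) (rho : R) (P0 : tkernel)
  : set tkernel :=
  [set P | is_kernel P /\ forall s a, D (P s a) (P0 s a) <= rho].

(* robust value J_c^pi = max_{P in unc_set} J_c^{pi,P} (written as a sup) *)
Definition robust_cost (gamma : R) (mu : S -> R) (D : (S -> R) -> (S -> R) -> R)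
    (rho : R) (P0 : tkernel) (c : S -> A -> R) (pi : policy) : R :=
  sup [set disc_cost gamma mu c pi P | P in unc_set D rho P0].

End RMDP.

(* Main.v *)
Require Import Defs.
From HB Require Import structures.
From mathcomp Require Import all_boot all_order all_algebra.
From mathcomp Require Import all_classical all_reals all_analysis.
Import Order.TTheory GRing.Theory Num.Theory.
From mathcomp Require Import ring lra.
Local Open Scope ring_scope.
Local Open Scope classical_set_scope.

Section H.
Variables (R : realType) (S A : finType).

Lemma convex01 (T : finType) (p x : T -> R) : is_dist p ->
  (forall t, 0 <= x t <= 1) -> 0 <= \sum_t p t * x t <= 1.
Proof.
move=> [p0 p1] hx; apply/andP; split.
  by apply: sumr_ge0 => t _; apply: mulr_ge0 => //; case/andP: (hx t).
rewrite -p1; apply: ler_sum => t _; rewrite -[leRHS]mulr1.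
by apply: ler_wpM2l => //; case/andP: (hx t).
Qed.

Lemma state_dist_dist (mu : S -> R) (pi : policy R S A) (P : tkernel R S A) t :
  is_dist mu -> is_policy pi -> is_kernel P -> is_dist (state_dist mu pi P t).
Proof.
move=> hmu hpi hP; elim: t => [|t [d0 d1]] //=; split.
  move=> s'; apply: sumr_ge0 => s _; apply: mulr_ge0 => //.
  apply: sumr_ge0 => a _; apply: mulr_ge0; first by case: (hpi s) => h _.
  by case: (hP s a) => h _.
rewrite exchange_big /= -d1; apply: eq_bigr => s _.
rewrite -mulr_sumr exchange_big /=.
rewrite -[RHS]mulr1; congr (_ * _); case: (hpi s) => _ <-; apply: eq_bigr => a _.
by rewrite -mulr_sumr; case: (hP s a) => _ ->; rewrite mulr1.
Qed.

Lemma geo_sum (g : R) N : g != 1 ->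
  \sum_(0 <= t < N) g ^+ t = (1 - g ^+ N) / (1 - g).
Proof.
move=> g1; have h : 1 - g != 0 by rewrite subr_eq0 eq_sym.
elim: N => [|N IH]; first by rewrite big_geq // expr0 subrr mul0r.
rewrite big_nat_recr //= IH exprS; field; done.
Qed.

Lemma disc_cost_bounds (gamma : R) (mu : S -> R) (c : S -> A -> R)
    (pi : policy R S A) (P : tkernel R S A) :
  0 <= gamma < 1 -> (forall s a, 0 <= c s a <= 1) ->
  is_dist mu -> is_policy pi -> is_kernel P ->
  0 <= disc_cost gamma mu c pi P <= (1 - gamma)^-1.
Proof.
move=> /andP[g0 g1] hc hmu hpi hP.
set x := fun t => \sum_(s : S) state_dist mu pi P t s * \sum_(a : A) pi s a * c s a.
have hx t : 0 <= x t <= 1.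
  apply: convex01; first exact: state_dist_dist.
  move=> s; exact: convex01.
set u := fun N => \sum_(0 <= t < N) (gamma ^+ t * x t).
have hu N : 0 <= u N <= (1 - gamma)^-1.
  apply/andP; split.
    apply: sumr_ge0 => t _; apply: mulr_ge0; [exact: exprn_ge0|by case/andP: (hx t)].
  apply: (@le_trans _ _ (\sum_(0 <= t < N) gamma ^+ t)).
    apply: ler_sum => t _; rewrite -[leRHS]mulr1; apply: ler_wpM2l; first exact: exprn_ge0.
    by case/andP: (hx t).
  rewrite geo_sum ?lt_eqF // ler_pdivrMr ?subr_gt0 // mulVf ?subr_eq0 1?eq_sym ?lt_eqF //.
  by rewrite gerBl exprn_ge0.
have nd : nondecreasing_seq u.
  apply/nondecreasing_seqP => n; rewrite /u big_nat_recr //= lerDl.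
  by apply: mulr_ge0; [exact: exprn_ge0|by case/andP: (hx n)].
have cv : cvgn u.
  apply: nondecreasing_is_cvgn => //; exists (1 - gamma)^-1 => _ [n _ <-].
  by case/andP: (hu n).
rewrite /disc_cost -/x -/u; apply/andP; split.
  by apply: limr_ge => //; near=> n; case/andP: (hu n).
by apply: limr_le => //; near=> n; case/andP: (hu n).
Unshelve. all: by end_near.
Qed.

Lemma robust_bounds (gamma : R) (mu : S -> R) D rho P0 (c : S -> A -> R)
    (pi : policy R S A) :
  0 <= gamma < 1 -> (forall s a, 0 <= c s a <= 1) ->
  is_dist mu -> is_policy pi ->
  0 <= robust_cost gamma mu D rho P0 c pi <= (1 - gamma)^-1.
Proof.
move=> hg hc hmu hpi; rewrite /robust_cost.
set E := (X in sup X).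
have hE : forall y, E y -> 0 <= y <= (1 - gamma)^-1.
  move=> _ [P [hP _] <-]; exact: disc_cost_bounds.
case: (pselect (E !=set0)) => [[y Ey]|nE]; last first.
  have -> : E = set0.
    by apply/seteqP; split=> z // Ez; exfalso; apply: nE; exists z.
  by rewrite sup0 lexx invr_ge0 subr_ge0; case/andP: hg => _ /ltW.
have ub : has_ubound E by exists (1 - gamma)^-1 => z /hE /andP[].
apply/andP; split.
  apply: (le_trans (proj1 (andP (hE y Ey)))); exact: ub_le_sup.
by apply: ge_sup; [exists y | move=> z /hE /andP[]].
Qed.
End H.

Lemma bigmax_ge_idx (R : realType) (I : eqType) (r : seq I) (x0 : R) (f : I -> R) :
  x0 <= \big[Num.max/x0]_(j <- r) f j.
Proof. by elim: r => [|a r IH]; rewrite ?big_nil // big_cons le_max IH orbT. Qed.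

Lemma bigmax_ge_term (R : realType) (I : eqType) (r : seq I) (x0 : R) (f : I -> R) i :
  i \in r -> f i <= \big[Num.max/x0]_(j <- r) f j.
Proof.
elim: r => [|a r IH] //; rewrite in_cons big_cons le_max => /orP[/eqP->|/IH->];
  by rewrite ?lexx ?orbT.
Qed.

Lemma bigmax_le_all (R : realType) (I : eqType) (r : seq I) (x0 c : R) (f : I -> R) :
  x0 <= c -> (forall j, f j <= c) -> \big[Num.max/x0]_(j <- r) f j <= c.
Proof.
by move=> h hf; elim: r => [|a r IH]; rewrite ?big_nil // big_cons ge_max hf IH.
Qed.

Theorem proposition1 (R : realType) (S A : finType) (K : nat) (gamma : R)
  (c0 : S -> A -> R) (c : 'I_K -> S -> A -> R) (b : 'I_K -> R) (mu : S -> R)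
  (P0 : tkernel R S A) (D : (S -> R) -> (S -> R) -> R) (rho : R)
  (hgamma : 0 <= gamma < 1)
  (hc0 : forall s a, 0 <= c0 s a <= 1)
  (hc : forall n s a, 0 <= c n s a <= 1)
  (hmu : is_dist mu) (hP0 : is_kernel P0) (hrho : 0 <= rho)
  (pistar : policy R S A) (eps : R) (pihat : policy R S A) :
  let J := robust_cost gamma mu D rho P0 in
  let H := (1 - gamma)^-1 in
  let lambda := 2 * H / eps in
  let obj (pi : policy R S A) :=
    \big[Num.max/ J c0 pi / lambda]_(n < K) (J (c n) pi - b n) in
  (* pistar is an optimal (feasible) policy of the robust constrained problem *)
  is_policy pistar ->
  (forall n, J (c n) pistar <= b n) ->
  (forall pi, is_policy pi -> (forall n, J (c n) pi <= b n) ->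
     J c0 pistar <= J c0 pi) ->
  0 < eps ->
  (* pihat is an optimal policy of the surrogate problem *)
  is_policy pihat ->
  (forall pi, is_policy pi -> obj pihat <= obj pi) ->
  J c0 pihat <= J c0 pistar /\ (forall n, J (c n) pihat - b n <= eps).
Proof.
move=> J H lambda obj hps hfeas _ heps hph hopt.
have Hpos : 0 < H by rewrite invr_gt0 subr_gt0; case/andP: hgamma.
have lpos : 0 < lambda by rewrite divr_gt0 // mulr_gt0.
have /andP[s0 s1] := (@robust_bounds R S A gamma mu D rho P0 c0 pistar) hgamma hc0 hmu hps.
have ostar : obj pistar <= J c0 pistar / lambda.
  apply: bigmax_le_all => [|j]; first exact: lexx.
  apply: (@le_trans _ _ 0); first by rewrite subr_le0; exact: hfeas.
  by rewrite divr_ge0 // ltW.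
have hle := le_trans (hopt _ hps) ostar.
split.
  have := le_trans (bigmax_ge_idx _ _ _ _ _) hle.
  by rewrite ler_pM2r ?invr_gt0.
move=> n; apply: le_trans (le_trans (@bigmax_ge_term _ _ _ _ _ _ (mem_index_enum n)) hle) _.
rewrite /lambda invf_div.
apply: (@le_trans _ _ (H * (eps / (2 * H)))).
  by apply: ler_wpM2r => //; rewrite divr_ge0 ?ltW ?mulr_gt0.
have -> : H * (eps / (2 * H)) = eps / 2.
  by field; rewrite gt_eqF.
lra.
Qed.
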